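(* Let $n\ge2$ and $(x,y)\in\mathbb{C}^n\times\mathbb{C}^{n-1}$. Then $(x,y)\in\mathbb{G}_{1,n}$ if and only if both of the following hold: (I) the restriction of $\Psi_n(\cdot;x,y)$ to $\overline{\mathbb{D}}$ lies in $\mathcal{O}(\mathbb{D})\cap\mathcal{C}(\overline{\mathbb{D}})$ and $\sup_{z\in\partial\mathbb{D}}|\Psi_n(z;x,y)|<1$; (II) if $\mathscr{R}_n(x,y)=0$, then every common zero of $P_n(\cdot;x)$ and $Q_n(\cdot;y)$ lies outside $\overline{\mathbb{D}}$.
   Context: $\mathbb{D}$ is the open unit disc. $P_n(z;x):=\sum_{j=0}^{n-1}(-1)^jx_{j+1}z^j$, $Q_n(z;y):=1+\sum_{j=1}^{n-1}(-1)^jy_jz^j$. $\mathbb{G}_{1,n}:=\{(x,y)\in\mathbb{C}^n\times\mathbb{C}^{n-1}: \text{the zero set of }(z,w)\mapsto Q_n(z;y)-wP_n(z;x)\text{ does not meet }\overline{\mathbb{D}}^2\}$. $\Psi_n(\cdot;x,y)$ is the rational function $P_n(\cdot;x)/Q_n(\cdot;y)$ with all common linear factors of numerator and denominator cancelled. $\mathscr{R}_n(x,y)$ is the resultant of the univariate polynomials $P_n(\cdot;x)$ and $Q_n(\cdot;y)$. *)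

(* Defs.v *)
(* The complex plane is modelled by an arbitrary
   numClosedFieldType C (algebraically closed field with a norm, of which the
   complex numbers are the model). *)
From HB Require Import structures.
From mathcomp Require Import all_boot all_order all_algebra.
Set Implicit Arguments. Unset Strict Implicit. Unset Printing Implicit Defensive.
Import Order.TTheory GRing.Theory Num.Theory.
Local Open Scope ring_scope.

(* P_n(z;x) = sum_{j=0}^{n-1} (-1)^j x_{j+1} z^j ; x j (0-based) = x_{j+1} *)
Definition Pn (C : numClosedFieldType) (n : nat) (x : 'I_n -> C) : {poly C} :=
  \sum_(j < n) ((-1) ^+ j * x j) *: 'X^j.

(* Q_n(z;y) = 1 + sum_{j=1}^{n-1} (-1)^j y_j z^j ; y j (0-based) = y_{j+1} *)
Definition Qn (C : numClosedFieldType) (n : nat) (y : 'I_n.-1 -> C) : {poly C} :=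
  1 + \sum_(j < n.-1) ((-1) ^+ j.+1 * y j) *: 'X^(j.+1).

Definition G1n (C : numClosedFieldType) (n : nat) (x : 'I_n -> C) (y : 'I_n.-1 -> C) : Prop :=
  forall z w : C, `|z| <= 1 -> `|w| <= 1 -> (Qn y).[z] - w * (Pn x).[z] != 0.

(* Psi_n = P_n/Q_n with all common (linear) factors cancelled, i.e. divided by
   their gcd (over an algebraically closed field every common factor is a
   product of linear ones).  Evaluated pointwise; at poles the total
   division of MathComp yields 0, so a pole in the closed disc makes the
   function discontinuous there. *)
Definition Psin (C : numClosedFieldType) (n : nat) (x : 'I_n -> C) (y : 'I_n.-1 -> C)
  (z : C) : C :=
  let g := gcdp (Pn x) (Qn y) in ((Pn x %/ g).[z]) / ((Qn y %/ g).[z]).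

Definition Rn (C : numClosedFieldType) (n : nat) (x : 'I_n -> C) (y : 'I_n.-1 -> C) : C :=
  resultant (Pn x) (Qn y).

Definition cont_on_cldisc (C : numClosedFieldType) (f : C -> C) : Prop :=
  forall z0 : C, `|z0| <= 1 -> forall e : C, 0 < e -> exists2 d : C, 0 < d &
    forall z : C, `|z| <= 1 -> `|z - z0| < d -> `|f z - f z0| < e.

Definition holo_on_disc (C : numClosedFieldType) (f : C -> C) : Prop :=
  forall z0 : C, `|z0| < 1 -> exists l : C, forall e : C, 0 < e -> exists2 d : C, 0 < d &
    forall z : C, `|z| < 1 -> 0 < `|z - z0| < d ->
      `|(f z - f z0) / (z - z0) - l| < e.

(* Main.v *)
Require Import Defs.
From HB Require Import structures.
From mathcomp Require Import all_boot all_order all_algebra all_field.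
From mathcomp Require Import ring.
Import Order.TTheory GRing.Theory Num.Theory.
Local Open Scope ring_scope.

Lemma circ_conj {C : numClosedFieldType} (z : C) : `|z| = 1 -> z^* = z^-1.
Proof.
move=> hz; have z0 : z != 0 by rewrite -normr_eq0 hz oner_eq0.
have h : z * z^* = 1 by rewrite -normCK hz expr1n.
by apply: (mulfI z0); rewrite h mulfV.
Qed.

Lemma factor_id {C : numClosedFieldType} (a z : C) :
  `|1 - a^* * z| ^+ 2 - `|z - a| ^+ 2 = (1 - `|z| ^+ 2) * (1 - `|a| ^+ 2).
Proof. rewrite !normCK !rmorphB !rmorphM rmorph1 /= conjCK. ring. Qed.

Lemma le_norm_sq {C : numClosedFieldType} (x y : C) :
  (`|x| <= `|y|) = (`|x| ^+ 2 <= `|y| ^+ 2).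
Proof. by rewrite ler_pXn2r // nnegrE. Qed.

Lemma lt_norm_sq {C : numClosedFieldType} (x y : C) :
  (`|x| < `|y|) = (`|x| ^+ 2 < `|y| ^+ 2).
Proof. by rewrite ltr_pXn2r // nnegrE. Qed.

Lemma min_pos {C : numClosedFieldType} (a b : C) : 0 < a -> 0 < b ->
  exists2 c : C, 0 < c & c <= a /\ c <= b.
Proof.
move=> a0 b0; case: (real_leP (gtr0_real a0) (gtr0_real b0)) => h.
  by exists a.
by exists b => //; split=> //; apply: ltW.
Qed.

Lemma horner_bound {C : numClosedFieldType} (p : {poly C}) (z : C) :
  `|z| <= 1 -> `|p.[z]| <= \sum_(i < size p) `|p`_i|.
Proof.
move=> hz; rewrite horner_coef; apply: le_trans (ler_norm_sum _ _ _) _.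
apply: ler_sum => i _; rewrite normrM normrX.
by apply: ler_piMr => //; apply: exprn_ile1.
Qed.

Lemma lipschitz {C : numClosedFieldType} (p : {poly C}) (z0 : C) :
  exists2 K : C, 0 < K &
    forall z, `|z| <= 1 -> `|p.[z] - p.[z0]| <= K * `|z - z0|.
Proof.
have : root (p - p.[z0]%:P) z0 by rewrite rootE hornerD hornerN hornerC subrr.
case/factor_theorem => D hD.
exists (1 + \sum_(i < size D) `|D`_i|).
  by apply: (lt_le_trans ltr01); rewrite lerDl sumr_ge0.
move=> z hz.
have -> : p.[z] - p.[z0] = D.[z] * (z - z0).
  have e : (p - p.[z0]%:P).[z] = p.[z] - p.[z0] by rewrite hornerD hornerN hornerC.
  by rewrite -e hD hornerM hornerXsubC.
rewrite normrM ler_wpM2r //.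
have := @horner_bound _ D z hz => h; apply: (le_trans h); by rewrite lerDr.
Qed.

Lemma rat_lip {C : numClosedFieldType} (a b : {poly C}) (z0 : C) :
  b.[z0] != 0 ->
  exists2 d : C, 0 < d & exists2 K : C, 0 < K &
   forall z, `|z| <= 1 -> `|z - z0| < d -> b.[z] != 0 /\
     `|a.[z] / b.[z] - a.[z0] / b.[z0]| <= K * `|z - z0|.
Proof.
move=> nzb; set b0 := b.[z0]; have nb0 : 0 < `|b0| by rewrite normr_gt0.
have [Kb Kb0 hKb] := lipschitz b z0.
pose H := a * b0%:P - (a.[z0])%:P * b.
have HE z : H.[z] = a.[z] * b0 - a.[z0] * b.[z].
  by rewrite /H hornerD hornerN !hornerM !hornerC.
have [KH KH0 hKH] := lipschitz H z0.
have two0 : (0 : C) < 2 by [].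
exists (`|b0| / (2 * Kb)); first by rewrite divr_gt0 // mulr_gt0.
exists (2 * KH / `|b0| ^+ 2); first by rewrite divr_gt0 ?mulr_gt0 ?exprn_gt0.
move=> z hz hd.
have h1 : Kb * `|z - z0| <= `|b0| / 2.
  apply: ltW; move: hd; rewrite -(ltr_pM2l Kb0) => hd; apply: (lt_le_trans hd).
  have -> : Kb * (`|b0| / (2 * Kb)) = `|b0| / 2.
    by field; rewrite gt_eqF.
  by [].
have hbz : `|b0| / 2 <= `|b.[z]|.
  have h2 := lerB_dist b0 b.[z]; rewrite distrC in h2.
  have h3 := le_trans h2 (le_trans (hKb z hz) h1).
  move: h3; rewrite lerBlDr => h3.
  by rewrite -(lerD2l (`|b0| / 2)) -splitr.
have bz0 : b.[z] != 0.
  by rewrite -normr_gt0; apply: lt_le_trans hbz; rewrite divr_gt0.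
split=> //.
have -> : a.[z] / b.[z] - a.[z0] / b.[z0] = H.[z] / (b.[z] * b0).
  by rewrite HE /b0; field; rewrite bz0 nzb.
have H0 : H.[z0] = 0 by rewrite HE /b0 subrr.
have hH := hKH z hz; rewrite H0 subr0 in hH.
rewrite normrM normfV normrM ler_pdivrMr; last first.
  by rewrite mulr_gt0 // (lt_le_trans _ hbz) // divr_gt0.
apply: (le_trans hH).
have e : KH * `|z - z0| = 2 * KH / `|b0| ^+ 2 * `|z - z0| * (`|b0| / 2 * `|b0|).
  by field; rewrite gt_eqF.
rewrite e; apply: ler_wpM2l.
  by rewrite mulr_ge0 // ltW // divr_gt0 ?mulr_gt0 ?exprn_gt0.
by rewrite ler_wpM2r // ltW.
Qed.
Arguments min_pos {C a b}.
Arguments rat_lip {C} a [b z0].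

Lemma prod_nseq_X {C : numClosedFieldType} (k : nat) (x : C) :
  \prod_(c <- nseq k (0 : C)) (x - c) = x ^+ k.
Proof.
elim: k => [|k ih]; first by rewrite big_nil expr0.
by rewrite /= big_cons ih subr0 exprS.
Qed.

Lemma logder {C : numClosedFieldType} (s : seq C) (x : C) :
  x \notin s ->
  (\prod_(c <- s) ('X - c%:P))^`().[x] =
  (\prod_(c <- s) (x - c)) * \sum_(c <- s) (x - c)^-1.
Proof.
elim: s => [|c s ih]; first by rewrite !big_nil derivC horner0 mulr0.
rewrite inE negb_or => /andP[xc xs].
rewrite !big_cons derivM derivXsubC mul1r hornerD hornerM hornerXsubC ih //.
rewrite horner_prod; under eq_bigr do rewrite hornerXsubC.
have xc0 : x - c != 0 by rewrite subr_eq0.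
by field.
Qed.

Lemma fcmp_lt {C : numClosedFieldType} (a z : C) :
  (`|z - a| < `|1 - a^* * z|) = (0 < (1 - `|z| ^+ 2) * (1 - `|a| ^+ 2)).
Proof. by rewrite lt_norm_sq -subr_gt0 factor_id. Qed.

Lemma fcmp_le {C : numClosedFieldType} (a z : C) :
  (`|z - a| <= `|1 - a^* * z|) = (0 <= (1 - `|z| ^+ 2) * (1 - `|a| ^+ 2)).
Proof. by rewrite le_norm_sq -subr_ge0 factor_id. Qed.

Lemma fcmp_lt' {C : numClosedFieldType} (a z : C) :
  (`|1 - a^* * z| < `|z - a|) = ((1 - `|z| ^+ 2) * (1 - `|a| ^+ 2) < 0).
Proof. by rewrite lt_norm_sq -subr_lt0 factor_id. Qed.

Lemma fcmp_le' {C : numClosedFieldType} (a z : C) :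
  (`|1 - a^* * z| <= `|z - a|) = ((1 - `|z| ^+ 2) * (1 - `|a| ^+ 2) <= 0).
Proof. by rewrite le_norm_sq -subr_le0 factor_id. Qed.

Lemma in_gt0 {C : numClosedFieldType} (z : C) : `|z| < 1 -> 0 < 1 - `|z| ^+ 2.
Proof. by move=> h; rewrite subr_gt0 exprn_ilt1. Qed.

Lemma out_lt0 {C : numClosedFieldType} (z : C) : 1 < `|z| -> 1 - `|z| ^+ 2 < 0.
Proof. by move=> h; rewrite subr_lt0 exprn_egt1. Qed.

Lemma interp {C : numClosedFieldType} (E h : {poly C}) (rs : seq C) (x : C) :
  E = lead_coef E *: \prod_(c <- rs) ('X - c%:P) -> E != 0 -> uniq rs ->
  (forall c, c \in rs -> (E %/ ('X - c%:P)).[c] != 0) ->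
  (size h <= size rs)%N ->
  h.[x] = \sum_(c <- rs) h.[c] * (E %/ ('X - c%:P)).[x] / (E %/ ('X - c%:P)).[c].
Proof.
move=> hE E0 urs hG hs.
pose G c := E %/ ('X - c%:P).
have lc0 : lead_coef E != 0 by rewrite lead_coef_eq0.
have sE : size E = (size rs).+1 by rewrite hE size_scale // size_prod_XsubC.
have rootE' c : c \in rs -> root E c by move=> hc; rewrite hE rootZ // root_prod_XsubC.
have GK c : c \in rs -> G c * ('X - c%:P) = E.
  by move=> hc; rewrite /G divpK // dvdp_XsubCl rootE'.
have sG c : (size (G c) <= size rs)%N.
  by rewrite /G size_divp ?polyXsubC_eq0 // sE size_XsubC subn1.
have G0 c c' : c \in rs -> c' \in rs -> c' != c -> (G c).[c'] = 0.
  move=> hc hc' ne; have := rootE' _ hc'; rewrite -(GK _ hc) rootE hornerM.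
  rewrite hornerXsubC mulf_eq0 subr_eq0 (negbTE ne) orbF => /eqP //.
pose R := h - \sum_(c <- rs) (h.[c] / (G c).[c]) *: G c.
have sR : (size R <= size rs)%N.
  apply: leq_trans (size_polyD _ _) _; rewrite geq_max hs size_opp.
  apply: (big_ind (fun p : {poly C} => size p <= size rs)%N) => //.
    by rewrite size_poly0.
    by move=> p q hp hq; apply: leq_trans (size_polyD _ _) _; rewrite geq_max hp hq.
  by move=> c _; apply: leq_trans (size_scale_leq _ _) _.
have rootR : all (root R) rs.
  apply/allP => c' hc'; rewrite rootE /R hornerD hornerN horner_sum.
  rewrite (bigD1_seq c') //= hornerZ divfK ?hG //.
  rewrite big1_seq ?addr0 ?subrr // => c /andP[ne hc]; rewrite hornerZ.
  by rewrite (G0 c c' hc hc') ?mulr0 // eq_sym.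
have R0 : R = 0.
  apply/eqP; apply: contraT => nR.
  by have := max_poly_roots nR rootR urs; rewrite ltnNge sR.
have hh : h = \sum_(c <- rs) (h.[c] / (G c).[c]) *: G c.
  by apply/eqP; rewrite -subr_eq0; apply/eqP.
rewrite {1}hh horner_sum; apply: eq_bigr => c _; rewrite hornerZ; by rewrite mulrAC.
Qed.

Lemma rat_cont {C : numClosedFieldType} (p q : {poly C}) :
  (forall z, `|z| <= 1 -> q.[z] != 0) -> cont_on_cldisc (fun z => p.[z] / q.[z]).
Proof.
move=> hq z0 hz0 e e0.
have [d d0 [K K0 hK]] := rat_lip p (hq z0 hz0).
have [c c0 [cd ce]] := min_pos d0 (divr_gt0 e0 K0).
exists c => // z hz hc.
have [_ h] := hK z hz (lt_le_trans hc cd).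
apply: (le_lt_trans h); rewrite mulrC -ltr_pdivlMr //.
exact: lt_le_trans hc ce.
Qed.

Lemma rat_holo {C : numClosedFieldType} (p q : {poly C}) :
  (forall z, `|z| <= 1 -> q.[z] != 0) -> holo_on_disc (fun z => p.[z] / q.[z]).
Proof.
move=> hq z0 hz0; have q0 := hq z0 (ltW hz0).
pose H := p * (q.[z0])%:P - (p.[z0])%:P * q.
have HE z : H.[z] = p.[z] * q.[z0] - p.[z0] * q.[z].
  by rewrite /H hornerD hornerN !hornerM !hornerC.
have : root H z0 by rewrite rootE HE mulrC subrr.
case/factor_theorem => DH hDH.
pose b := q * (q.[z0])%:P.
have bE z : b.[z] = q.[z] * q.[z0] by rewrite /b hornerM hornerC.
have b0 : b.[z0] != 0 by rewrite bE mulf_neq0.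
exists (DH.[z0] / b.[z0]) => e e0.
have [d d0 [K K0 hK]] := rat_lip DH b0.
have [c c0 [cd ce]] := min_pos d0 (divr_gt0 e0 K0).
exists c => // z hz /andP[hz1 hc].
have [bz h] := hK z (ltW hz) (lt_le_trans hc cd).
have qz : q.[z] != 0 by move: bz; rewrite bE mulf_eq0 negb_or => /andP[].
have zz : z - z0 != 0 by rewrite -normr_gt0.
have -> : (p.[z] / q.[z] - p.[z0] / q.[z0]) / (z - z0) = DH.[z] / b.[z].
  have e1 : H.[z] = DH.[z] * (z - z0) by rewrite hDH hornerM hornerXsubC.
  rewrite bE; move: e1; rewrite HE => e1.
  have -> : p.[z] / q.[z] - p.[z0] / q.[z0] =
            (p.[z] * q.[z0] - p.[z0] * q.[z]) / (q.[z] * q.[z0]).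
    by field; rewrite qz q0.
  rewrite e1; field; by rewrite qz q0 zz.
apply: (le_lt_trans h); rewrite mulrC -ltr_pdivlMr //.
exact: lt_le_trans hc ce.
Qed.

Definition revc {C : numClosedFieldType} (m : nat) (h : {poly C}) : {poly C} :=
  \poly_(i < m.+1) (h`_(m - i))^*.

Lemma revc_eval {C : numClosedFieldType} (m : nat) (h : {poly C}) (z : C) :
  (size h <= m.+1)%N -> `|z| = 1 -> (revc m h).[z] = z ^+ m * (h.[z])^*.
Proof.
move=> hs hz; have z0 : z != 0 by rewrite -normr_eq0 hz oner_eq0.
rewrite /revc horner_poly (horner_coef_wide _ hs) rmorph_sum mulr_sumr.
rewrite (reindex_inj rev_ord_inj) /=; apply: eq_bigr => i _.
have hi : (i <= m)%N by rewrite -ltnS.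
rewrite subKn // rmorphM rmorphXn /= (circ_conj _ hz) exprB ?unitfE //.
rewrite exprVn !exprS; field; by rewrite expf_neq0 // z0.
Qed.

Lemma sup_bound {C : numClosedFieldType} (p q : {poly C}) :
  (forall z, `|z| = 1 -> `|p.[z]| < `|q.[z]|) ->
  exists2 r : C, r < 1 & forall z, `|z| = 1 -> `|p.[z] / q.[z]| <= r.
Proof.
move=> hpq.
pose m := maxn (size p) (size q).
have sp : (size p <= m.+1)%N by rewrite ltnW // ltnS leq_maxl.
have sq : (size q <= m.+1)%N by rewrite ltnW // ltnS leq_maxr.
pose Phi := q * revc m q - p * revc m p.
have PhiE z : `|z| = 1 -> Phi.[z] = z ^+ m * (`|q.[z]| ^+ 2 - `|p.[z]| ^+ 2).
  move=> hz; rewrite /Phi hornerD hornerN !hornerM !revc_eval // !normCK; ring.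
have hz1 : `|1 : C| = 1 by rewrite normr1.
have gap z : `|z| = 1 -> 0 < `|q.[z]| ^+ 2 - `|p.[z]| ^+ 2.
  by move=> hz; rewrite subr_gt0 -lt_norm_sq; apply: hpq.
have normPhi z : `|z| = 1 -> `|Phi.[z]| = `|q.[z]| ^+ 2 - `|p.[z]| ^+ 2.
  move=> hz; rewrite PhiE // normrM normrX hz expr1n mul1r gtr0_norm //.
  exact: gap.
have Phi0 : Phi != 0.
  apply/negP => /eqP h; have := normPhi 1 hz1; rewrite h horner0 normr0 => e.
  by move: (gap 1 hz1); rewrite -e ltxx.
have [rs hrs] := closed_field_poly_normal Phi.
have lc0 : lead_coef Phi != 0 by rewrite lead_coef_eq0.
have noroot rho : rho \in rs -> `|rho| != 1.
  move=> hr; apply/negP => /eqP h.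
  have : root Phi rho by rewrite hrs rootZ // root_prod_XsubC.
  rewrite rootE => /eqP e; have := normPhi rho h; rewrite e normr0 => e2.
  by move: (gap rho h); rewrite -e2 ltxx.
pose L := `|lead_coef Phi| * \prod_(rho <- rs) `| `|rho| - 1|.
have L0 : 0 < L.
  rewrite /L mulr_gt0 ?normr_gt0 // big_seq; apply: prodr_gt0 => rho hr.
  by rewrite normr_gt0 subr_eq0 (noroot _ hr).
have Lb z : `|z| = 1 -> L <= `|Phi.[z]|.
  move=> hz; rewrite {1}hrs hornerZ normrM horner_prod normr_prod /L.
  apply: ler_wpM2l => //; apply: ler_prod => rho _; apply/andP; split=> //.
  rewrite hornerXsubC -{1}hz distrC; exact: ler_dist_dist.
pose S := \sum_(i < size q) `|q`_i|.
have S0 : 0 <= S by rewrite sumr_ge0.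
pose M := S ^+ 2.
have qM z : `|z| = 1 -> `|q.[z]| ^+ 2 <= M.
  move=> hz; rewrite /M ler_pXn2r // ?nnegrE //.
  by apply: horner_bound; rewrite hz.
have M0 : 0 < M.
  apply: lt_le_trans (qM 1 hz1); apply: lt_le_trans (gap 1 hz1) _.
  by rewrite gerDl oppr_le0 exprn_ge0.
pose u := L / M.
have u0 : 0 < u by rewrite divr_gt0.
exists (1 - u / 2).
  by rewrite gtrDl oppr_lt0 divr_gt0.
move=> z hz.
have qz0 : `|q.[z]| ^+ 2 > 0.
  apply: lt_le_trans (gap z hz) _; by rewrite gerDl oppr_le0 exprn_ge0.
have h1 : `|p.[z]| ^+ 2 <= `|q.[z]| ^+ 2 - L.
  by rewrite lerBrDl -lerBrDr -normPhi // Lb.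
have h2 : `|q.[z]| ^+ 2 - L <= (1 - u) * `|q.[z]| ^+ 2.
  rewrite mulrBl mul1r; apply: lerB => //.
  by rewrite /u mulrAC ler_pdivrMr // ler_wpM2l ?qM // ltW.
have t2 := le_trans h1 h2.
have u1 : 0 <= 1 - u.
  by rewrite -(pmulr_lge0 _ qz0); apply: le_trans t2; rewrite exprn_ge0.
have r0 : 0 <= 1 - u / 2.
  apply: le_trans u1 _; rewrite lerD2l lerN2 ler_pdivrMr //.
  by rewrite ler_pMr // ?ler1n.
rewrite normrM normfV -(@ler_pXn2r _ 2) ?nnegrE //; last first.
  by rewrite divr_ge0.
rewrite expr_div_n ler_pdivrMr //; apply: (le_trans t2).
rewrite ler_wpM2r ?exprn_ge0 //.
rewrite -subr_ge0 (_ : (1 - u / 2) ^+ 2 - (1 - u) = (u / 2) ^+ 2); last by field.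
by rewrite exprn_ge0 // divr_ge0 // ltW.
Qed.

Lemma sum_nseq_inv {C : numClosedFieldType} (k : nat) (x : C) :
  \sum_(c <- nseq k (0 : C)) (x - c)^-1 = k%:R * x^-1.
Proof.
elim: k => [|k ih]; first by rewrite big_nil mul0r.
by rewrite /= big_cons ih subr0 mulrSr mulrDl mul1r addrC.
Qed.

Lemma max_principle {C : numClosedFieldType} (p : {poly C}) (beta r z0 : C)
  (rs : seq C) :
  beta != 0 -> (forall a, a \in rs -> 1 < `|a|) ->
  (forall z, `|z| = 1 ->
     `|p.[z]| <= r * `|(beta *: \prod_(a <- rs) ('X - a%:P)).[z]|) ->
  `|z0| < 1 ->
  `|p.[z0]| <= r * `|(beta *: \prod_(a <- rs) ('X - a%:P)).[z0]|.
Proof.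
move=> b0 hrs hp hz0.
set q := beta *: _.
have qE x : q.[x] = beta * \prod_(a <- rs) (x - a).
  by rewrite /q hornerZ horner_prod; under eq_bigr do rewrite hornerXsubC.
have a0 a : a \in rs -> a != 0.
  by move=> ha; rewrite -normr_gt0; apply: lt_trans (hrs a ha).
have ac0 a : a \in rs -> a^* != 0 by move=> ha; rewrite conjC_eq0 a0.
have xa x a : `|x| <= 1 -> a \in rs -> x - a != 0.
  move=> hx ha; rewrite subr_eq0; apply/eqP => e.
  by have := hrs a ha; rewrite -e => /(le_lt_trans hx); rewrite ltxx.
have qnz x : `|x| <= 1 -> q.[x] != 0.
  move=> hx; rewrite qE mulf_neq0 // prodf_seq_neq0; apply/allP => a ha /=.
  exact: xa.
pose k := (size p).+1.
pose LA := z0 :: (nseq k 0 ++ [seq (a^*)^-1 | a <- rs]).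
pose cA := beta^* * \prod_(a <- rs) (- a^*).
have cA0 : cA != 0.
  rewrite /cA mulf_neq0 ?conjC_eq0 // prodf_seq_neq0; apply/allP => a ha /=.
  by rewrite oppr_eq0 ac0.
pose A := cA *: \prod_(c <- LA) ('X - c%:P).
have AE x : A.[x] = beta^* * ((x - z0) * (x ^+ k * \prod_(a <- rs) (1 - a^* * x))).
  rewrite /A hornerZ horner_prod; under eq_bigr do rewrite hornerXsubC.
  rewrite big_cons big_cat big_map prod_nseq_X /cA -!mulrA; congr (_ * _).
  rewrite mulrCA; congr (_ * _); rewrite mulrCA; congr (_ * _).
  rewrite -big_split /=; apply: eq_big_seq => a ha /=.
  by field; rewrite ac0.
pose B := (1 - z0^* *: 'X) * q.
have BE x : B.[x] = (1 - z0^* * x) * q.[x].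
  by rewrite /B hornerM hornerD hornerN hornerZ hornerX hornerC.
pose E := A - B.
have sLA : size LA = (k + size rs).+1 by rewrite /= size_cat size_nseq size_map.
have sA : size A = (size LA).+1 by rewrite /A size_scale // size_prod_XsubC.
have sq : size q = (size rs).+1 by rewrite /q size_scale // size_prod_XsubC.
have sB : (size B <= (size rs).+2)%N.
  apply: leq_trans (size_polyMleq _ _) _; rewrite sq.
  have : (size ((1 - z0^* *: 'X) : {poly C})%R <= 2)%N.
    apply: leq_trans (size_polyD _ _) _; rewrite geq_max size_poly1 size_opp.
    by rewrite (leq_trans (size_scale_leq _ _)) // size_polyX.
  by move=> h; rewrite addnS /= -add2n leq_add2r.
have sE : size E = size A.
  by rewrite /E size_polyDl // size_opp sA sLA; apply: leq_ltn_trans sB _; rewrite !ltnS leq_addl.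
have E0 : E != 0 by rewrite -size_poly_gt0 sE sA.
have [rsE hrsE] := closed_field_poly_normal E.
have srsE : size rsE = size LA.
  have : size E = (size rsE).+1.
    by rewrite {1}hrsE size_scale ?size_prod_XsubC // lead_coef_eq0.
  by rewrite sE sA => -[].
have rootEc c : c \in rsE -> A.[c] = B.[c].
  move=> hc; have : root E c by rewrite hrsE rootZ ?lead_coef_eq0 // root_prod_XsubC.
  by rewrite rootE /E hornerD hornerN subr_eq0 => /eqP.
have circ c : c \in rsE -> `|c| = 1.
  move=> hc; have AB := rootEc c hc.
  have nA : `|A.[c]| =
      `|beta| * (`|c - z0| * (`|c| ^+ k * \prod_(a <- rs) `|1 - a^* * c|)).
    by rewrite AE !normrM normrX normr_prod norm_conjC.
  have nB : `|B.[c]| = `|1 - z0^* * c| * (`|beta| * \prod_(a <- rs) `|c - a|).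
    by rewrite BE qE !normrM normr_prod.
  have nb : 0 < `|beta| by rewrite normr_gt0.
  case: (real_ltgtP (normr_real c) (real1 _)) => // hc1.
  - have P0 : 0 < \prod_(a <- rs) `|c - a|.
      by rewrite big_seq; apply: prodr_gt0 => a ha; rewrite normr_gt0 xa // ltW.
    have h1 : `|c - z0| < `|1 - z0^* * c| by rewrite fcmp_lt mulr_gt0 // in_gt0.
    have h2 : \prod_(a <- rs) `|1 - a^* * c| <= \prod_(a <- rs) `|c - a|.
      rewrite big_seq [X in _ <= X]big_seq; apply: ler_prod => a ha.
      rewrite normr_ge0 /= fcmp_le' mulr_ge0_le0 // ?ltW ?in_gt0 //.
      exact: out_lt0 (hrs a ha).
    have h3 : `|c| ^+ k <= 1 by rewrite exprn_ile1 // ltW.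
    have : `|A.[c]| < `|B.[c]|.
      rewrite nA nB [X in _ < X]mulrCA ltr_pM2l //.
      apply: le_lt_trans (_ : _ <= `|c - z0| * \prod_(a <- rs) `|c - a|) _.
        rewrite ler_wpM2l // -[X in _ <= X]mul1r ler_pM ?exprn_ge0 //.
        by apply: prodr_ge0 => a _.
      by rewrite ltr_pM2r.
    by rewrite AB ltxx.
  - have cz : c - z0 != 0.
      rewrite subr_eq0; apply/eqP => e; move: hc1; rewrite e => /(lt_trans hz0).
      by rewrite ltxx.
    have c0 : c != 0 by rewrite -normr_gt0; apply: lt_trans hc1.
    have Ac0 : A.[c] != 0.
      rewrite AE mulf_neq0 ?conjC_eq0 // mulf_neq0 // mulf_neq0 ?expf_neq0 //.
      rewrite prodf_seq_neq0; apply/allP => a ha /=; rewrite subr_eq0.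
      apply/eqP => e; have : `|a^* * c| = 1 by rewrite -e normr1.
      rewrite normrM norm_conjC => e2.
      have : 1 < `|a| * `|c| by rewrite -[1]mulr1 ltr_pM // hrs.
      by rewrite e2 ltxx.
    have P0 : 0 < \prod_(a <- rs) `|c - a|.
      rewrite big_seq; apply: prodr_gt0 => a ha; rewrite normr_gt0 subr_eq0.
      apply/eqP => e; move: Ac0; rewrite AB BE e.
      have : root q a by rewrite /q rootZ // root_prod_XsubC.
      by rewrite rootE => /eqP ->; rewrite mulr0 eqxx.
    have h1 : `|1 - z0^* * c| < `|c - z0|.
      by rewrite fcmp_lt' pmulr_llt0 ?in_gt0 // out_lt0.
    have h2 : \prod_(a <- rs) `|c - a| <= \prod_(a <- rs) `|1 - a^* * c|.
      rewrite big_seq [X in _ <= X]big_seq; apply: ler_prod => a ha.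
      rewrite normr_ge0 /= fcmp_le mulr_le0 // ltW // out_lt0 //; exact: hrs.
    have h3 : 1 <= `|c| ^+ k by rewrite exprn_ege1 // ltW.
    have : `|B.[c]| < `|A.[c]|.
      rewrite nA nB [X in X < _]mulrCA ltr_pM2l //.
      apply: lt_le_trans (_ : _ < `|c - z0| * \prod_(a <- rs) `|c - a|) _.
        by rewrite ltr_pM2r.
      rewrite ler_wpM2l // -[X in X <= _]mul1r ler_pM //.
      by apply: prodr_ge0 => a _.
    by rewrite AB ltxx.
have cz c : c \in rsE -> c - z0 != 0.
  move=> hc; rewrite subr_eq0; apply/eqP => e; move: hz0.
  by rewrite -e circ // ltxx.
have c0 c : c \in rsE -> c != 0 by move=> hc; rewrite -normr_eq0 circ // oner_eq0.
have ca c a : c \in rsE -> a \in rs -> c * a^* != 1.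
  move=> hc ha; apply/eqP => e; have : `|c * a^*| = 1 by rewrite e normr1.
  by rewrite normrM norm_conjC circ // mul1r => e2; move: (hrs a ha); rewrite e2 ltxx.
have cnLA c : c \in rsE -> c \notin LA.
  move=> hc; rewrite inE mem_cat negb_or; apply/andP; split.
    by rewrite -subr_eq0 cz.
  rewrite negb_or mem_nseq (negbTE (c0 c hc)) andbF /=; apply/mapP => -[a ha e].
  by move: (ca c a hc ha); rewrite e mulVf ?eqxx // ac0.
have cna c a : c \in rsE -> a \in rs -> c - (a^*)^-1 != 0.
  move=> hc ha; rewrite subr_eq0; apply/eqP => e.
  by move: (ca c a hc ha); rewrite e mulVf ?eqxx // ac0.
have cnr c : c \in rsE -> c \notin rs.
  move=> hc; apply/negP => hr; move: (xa c c); rewrite circ // lexx subrr eqxx.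
  by move=> /(_ isT hr).
have ca' c a : c \in rsE -> a \in rs -> c - a != 0.
  by move=> hc ha; apply: xa => //; rewrite circ.
pose SA c := \sum_(x <- LA) (c - x)^-1.
have SAE c : SA c = (c - z0)^-1 + k%:R * c^-1 + \sum_(a <- rs) (c - (a^*)^-1)^-1.
  by rewrite /SA big_cons big_cat big_map sum_nseq_inv addrA.
have hAder c : c \in rsE -> A^`().[c] = A.[c] * SA c.
  move=> hc; rewrite /A derivZ !hornerZ logder ?cnLA // horner_prod.
  by under [in RHS]eq_bigr do rewrite hornerXsubC; rewrite mulrA.
pose Sq c := \sum_(a <- rs) (c - a)^-1.
have hqder c : c \in rsE -> q^`().[c] = q.[c] * Sq c.
  move=> hc; rewrite /q derivZ !hornerZ logder ?cnr // horner_prod.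
  by under [in RHS]eq_bigr do rewrite hornerXsubC; rewrite mulrA.
have hBder c : B^`().[c] = - z0^* * q.[c] + (1 - z0^* * c) * q^`().[c].
  rewrite /B derivM derivB -polyC1 derivC derivZ derivX alg_polyC sub0r.
  by rewrite hornerD !hornerM hornerN hornerD hornerN hornerZ !hornerC hornerZ hornerX.
pose Dr c := (1 - z0 * z0^*) + (c - z0) * (c^-1 - z0^*) *
   (k%:R + c * \sum_(a <- rs) ((c - (a^*)^-1)^-1 - (c - a)^-1)).
have hEder c : c \in rsE -> E^`().[c] = q.[c] * Dr c / (c - z0).
  move=> hc; rewrite /E derivB hornerD hornerN hAder // hBder hqder //.
  rewrite rootEc // BE SAE /Dr sumrB /Sq.
  set X1 := \sum_(a <- rs) _; set X2 := \sum_(a <- rs) _.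
  by field; rewrite (cz c hc) (c0 c hc).
pose Dn c := (1 - `|z0| ^+ 2) + `|c - z0| ^+ 2 *
   (k%:R + \sum_(a <- rs) (`|a| ^+ 2 - 1) / `|c - a| ^+ 2).
have DrE c : c \in rsE -> Dr c = Dn c.
  move=> hc; rewrite /Dr /Dn !normCK rmorphB /= (circ_conj _ (circ c hc)).
  congr (_ + _ * (_ + _)); rewrite mulr_sumr; apply: eq_big_seq => a ha.
  rewrite !normCK rmorphB /= (circ_conj _ (circ c hc)).
  have h1 : c^-1 - a^* != 0.
    rewrite subr_eq0; apply/eqP => e; move: (ca c a hc ha).
    by rewrite -e mulfV ?eqxx // c0.
  have hca : c * a^* - 1 != 0 by rewrite subr_eq0 ca.
  have hca2 : 1 - a^* * c != 0 by rewrite subr_eq0 eq_sym mulrC ca.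
  field; apply/and5P; split; [exact: c0 | by rewrite mulNr hca2 | exact: ca' | exact: ac0 | exact: hca].
have Dpos c : c \in rsE -> 0 < Dr c.
  move=> hc; rewrite DrE // /Dn; apply: (lt_le_trans (@in_gt0 _ z0 hz0)).
  rewrite lerDl mulr_ge0 ?exprn_ge0 // addr_ge0 ?ler0n //.
  rewrite big_seq; apply: sumr_ge0 => a ha; rewrite divr_ge0 ?exprn_ge0 //.
  by rewrite subr_ge0 exprn_ege1 // ltW // hrs.
have Ed0 c : c \in rsE -> E^`().[c] != 0.
  move=> hc; rewrite hEder // mulf_neq0 ?invr_eq0 ?cz // mulf_neq0 ?qnz ?circ //.
  by rewrite gt_eqF // Dpos.
have memE c : root E c -> c \in rsE.
  by rewrite {1}hrsE rootZ ?lead_coef_eq0 // root_prod_XsubC.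
have lc0 : lead_coef E != 0 by rewrite lead_coef_eq0.
have urs : uniq rsE.
  have sepE : separable_poly E.
    by rewrite unlock; apply: Pdiv.ClosedField.root_coprimep => c /memE /Ed0.
  by rewrite -separable_prod_XsubC -(eqp_separable (eqp_scale _ lc0)) -hrsE.
pose G c := E %/ ('X - c%:P).
have GK c : c \in rsE -> G c * ('X - c%:P) = E.
  move=> hc; rewrite /G divpK // dvdp_XsubCl hrsE rootZ // root_prod_XsubC //.
have Gc c : c \in rsE -> (G c).[c] = E^`().[c].
  move=> hc; rewrite -(GK c hc) derivM derivXsubC hornerD !hornerM hornerXsubC.
  by rewrite subrr mulr0 add0r -polyC1 hornerC mulr1.
have Gz0 c : c \in rsE -> (G c).[z0] = (1 - z0 * z0^*) * q.[z0] / (c - z0).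
  move=> hc; have := congr1 (fun P => P.[z0]) (GK c hc) => /=.
  rewrite hornerM hornerXsubC /E hornerD hornerN AE BE subrr !mul0r mulr0 add0r.
  move=> e; have zc : z0 - c != 0 by rewrite -oppr_eq0 opprB cz.
  apply: (mulIf zc); rewrite e; field; by rewrite cz.
have hG c : c \in rsE -> (G c).[c] != 0 by move=> hc; rewrite Gc // Ed0.
have szq : (size q <= size rsE)%N by rewrite sq srsE sLA ltnS leq_addl.
have szp : (size p <= size rsE)%N.
  by rewrite srsE sLA /k addSn; apply: leq_trans (leq_addr (size rs) _) _; rewrite leqW // leqW.
have iq := @interp _ E q rsE z0 hrsE E0 urs hG szq.
have ip := @interp _ E p rsE z0 hrsE E0 urs hG szp.
pose wt c := (1 - z0 * z0^*) / Dr c.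
have ratio c : c \in rsE -> (G c).[z0] / (G c).[c] = wt c * q.[z0] / q.[c].
  move=> hc; rewrite Gz0 // Gc // hEder //; rewrite /wt.
  have D0 : Dr c != 0 by rewrite gt_eqF // Dpos.
  by field; rewrite D0 (cz c hc) qnz // circ.
have qz0 : q.[z0] != 0 by rewrite qnz // ltW.
have swt : \sum_(c <- rsE) wt c = 1.
  move: iq; rewrite (eq_big_seq (fun c => q.[z0] * wt c)); last first.
    move=> c hc; rewrite -mulrA ratio //; field; by rewrite qnz // circ.
  by rewrite -mulr_sumr -{1}[q.[z0]]mulr1 => /(mulfI qz0).
have pE : p.[z0] = q.[z0] * \sum_(c <- rsE) wt c * (p.[c] / q.[c]).
  rewrite ip mulr_sumr; apply: eq_big_seq => c hc; rewrite -mulrA ratio //.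
  by field; rewrite qnz // circ.
have wt0 c : c \in rsE -> 0 < wt c.
  by move=> hc; rewrite /wt divr_gt0 ?Dpos // -normCK in_gt0.
rewrite pE normrM mulrC ler_wpM2r //.
apply: le_trans (ler_norm_sum _ _ _) _.
rewrite -[r]mul1r -swt mulr_suml big_seq [X in _ <= X]big_seq.
apply: ler_sum => c hc; rewrite normrM gtr0_norm ?wt0 //.
apply: ler_wpM2l; first exact: ltW (wt0 c hc).
rewrite normrM normfV ler_pdivrMr; last by rewrite normr_gt0 qnz // (circ c hc).
exact: hp (circ c hc).
Qed.

Lemma pole_discont {C : numClosedFieldType} (p q : {poly C}) (z0 : C) :
  q != 0 -> `|z0| <= 1 -> root q z0 -> p.[z0] != 0 ->
  ~ cont_on_cldisc (fun z => p.[z] / q.[z]).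
Proof.
move=> q0 hz0 rq p0 hc.
have [mu [s ns hqs]] := multiplicity_XsubC q z0; rewrite q0 /= in ns.
have s0 : s.[z0] != 0 by [].
have np0 : 0 < `|p.[z0]| by rewrite normr_gt0.
have ns0 : 0 < `|s.[z0]| by rewrite normr_gt0.
have e0 : 0 < `|p.[z0]| / 2 by rewrite divr_gt0.
have [dl dl0 hdl] := hc z0 hz0 _ e0.
have [Ks Ks0 hKs] := lipschitz s z0.
have [Kp Kp0 hKp] := lipschitz p z0.
have [Kq Kq0 hKq] := lipschitz q z0.
have [c1 c10 [c1a c1b]] := min_pos dl0 (divr_gt0 ns0 Ks0).
have [c2 c20 [c2a c2b]] := min_pos c10 (divr_gt0 e0 Kp0).
have [c3 c30 [c3a c3b]] := min_pos c20 (divr_gt0 ltr01 Kq0).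
have [c4 c40 [c4a c4b]] := min_pos c30 ltr01.
have [t t0 [tc t1]] : exists2 t : C, 0 < t & t < c4 /\ t <= 1.
  exists (c4 / 2); first by rewrite divr_gt0.
  have tc : c4 / 2 < c4 by rewrite ltr_pdivrMr // ltr_pMr // ltr1n.
  by split=> //; apply: ltW; apply: lt_le_trans tc c4b.
pose z := if z0 == 0 then t else z0 * (1 - t).
have [hz [dz0 dzt]] : `|z| <= 1 /\ 0 < `|z - z0| /\ `|z - z0| <= t.
  rewrite /z; case: eqP => [-> | /eqP nz].
    by rewrite subr0 gtr0_norm.
  have -> : z0 * (1 - t) - z0 = - (z0 * t) by ring.
  have t1' : 0 <= 1 - t by rewrite subr_ge0.
  have e1 : `|- (z0 * t)| = `|z0| * t by rewrite normrN normrM (gtr0_norm t0).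
  have e2 : `|z0 * (1 - t)| = `|z0| * (1 - t) by rewrite normrM (ger0_norm t1').
  rewrite e1 e2; split; first by apply: mulr_ile1; rewrite ?normr_ge0 // lerBlDl lerDr ltW.
  split; first by rewrite mulr_gt0 ?normr_gt0.
  by apply: ler_piMl => //; apply: ltW.
have hd c : c4 <= c -> `|z - z0| < c by move=> h; apply: le_lt_trans dzt (lt_le_trans tc h).
have d1 : `|z - z0| < c1 by apply: hd; apply: le_trans c4a (le_trans c3a c2a).
have d2 : `|z - z0| < c2 by apply: hd; apply: le_trans c4a c3a.
have d3 : `|z - z0| < c3 by apply: hd.
have hpsi := hdl z hz (lt_le_trans d1 c1a).
have psi0 : p.[z0] / q.[z0] = 0 by move/eqP: rq => ->; rewrite invr0 mulr0.
rewrite psi0 subr0 in hpsi.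
have sz : s.[z] != 0.
  apply/eqP => e; have := hKs z hz; rewrite e sub0r normrN => h.
  have : Ks * `|z - z0| < `|s.[z0]|.
    by rewrite mulrC -ltr_pdivlMr //; apply: lt_le_trans d1 c1b.
  by move/(le_lt_trans h); rewrite ltxx.
have qz : q.[z] != 0.
  rewrite hqs hornerM horner_exp hornerXsubC mulf_neq0 // expf_neq0 //.
  by rewrite -normr_gt0.
have hq1 : `|q.[z]| <= 1.
  have := hKq z hz; move/eqP: rq => ->; rewrite subr0 => h; apply: (le_trans h).
  apply: ltW; rewrite mulrC -ltr_pdivlMr //; apply: lt_le_trans d3 c3b.
have hp2 : `|p.[z0]| / 2 < `|p.[z]|.
  have h1 : `|p.[z0]| - `|p.[z]| <= Kp * `|z - z0|.
    by apply: le_trans (lerB_dist _ _) _; rewrite distrC hKp.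
  have h2 : Kp * `|z - z0| < `|p.[z0]| / 2.
    by rewrite mulrC -ltr_pdivlMr //; apply: lt_le_trans d2 c2b.
  have := le_lt_trans h1 h2; rewrite ltrBlDr => h3.
  by rewrite -(ltrD2l (`|p.[z0]| / 2)) -splitr.
have : `|p.[z]| <= `|p.[z] / q.[z]|.
  rewrite normrM normfV ler_pdivlMr ?normr_gt0 //.
  by apply: ler_piMr.
by move=> h; have := lt_trans (lt_le_trans hp2 h) hpsi; rewrite ltxx.
Qed.

Theorem theorem3p2 (C : numClosedFieldType) (n : nat) (hn : (2 <= n)%N)
  (x : 'I_n -> C) (y : 'I_n.-1 -> C) :
  G1n x y <->
  ((holo_on_disc (Psin x y) /\ cont_on_cldisc (Psin x y) /\
    exists2 r : C, r < 1 & forall z : C, `|z| = 1 -> `|Psin x y z| <= r)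
   /\
   (Rn x y = 0 -> forall z : C, root (Pn x) z -> root (Qn y) z -> 1 < `|z|)).
Proof.
set P := Pn x; set Q := Qn y.
set g := gcdp P Q; set p := P %/ g; set q := Q %/ g.
have PsiE : Psin x y = fun z => p.[z] / q.[z] by [].
have Q00 : Q.[0] = 1.
  rewrite /Q /Qn hornerD horner_sum big1 ?addr0 ?hornerC // => j _.
  by rewrite hornerZ hornerXn expr0n /= mulr0.
have Q0 : Q != 0 by apply/eqP => e; move: Q00; rewrite e horner0 => /eqP; rewrite eq_sym oner_eq0.
have g0 : g != 0 by rewrite /g gcdp_eq0 negb_and Q0 orbT.
have Pg : P = p * g by rewrite /p divpK // dvdp_gcdl.
have Qg : Q = q * g by rewrite /q divpK // dvdp_gcdr.
have cop : coprimep p q by apply: coprimep_div_gcd; rewrite Q0 orbT.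
have PE z : P.[z] = p.[z] * g.[z] by rewrite {1}Pg hornerM.
have QE z : Q.[z] = q.[z] * g.[z] by rewrite {1}Qg hornerM.
rewrite PsiE; split.
- move=> hG.
  have hlt z : `|z| <= 1 -> `|P.[z]| < `|Q.[z]|.
    move=> hz; rewrite real_ltNge ?normr_real //; apply/negP => hle.
    case: (eqVneq P.[z] 0) => hP.
      have : Q.[z] = 0 by apply/eqP; rewrite -normr_le0; move: hle; rewrite hP normr0.
      move=> hQ; have := hG z 0 hz; rewrite normr0 ler01 mul0r subr0 hQ eqxx.
      by move/(_ isT).
    have := hG z (Q.[z] / P.[z]) hz; rewrite normrM normfV ler_pdivrMr ?normr_gt0 //.
    by rewrite mul1r hle divfK // subrr eqxx => /(_ isT).
  have Qnz z : `|z| <= 1 -> Q.[z] != 0.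
    by move=> hz; rewrite -normr_gt0; apply: le_lt_trans (hlt z hz).
  have qnz z : `|z| <= 1 -> q.[z] != 0.
    by move=> hz; move: (Qnz z hz); rewrite QE mulf_eq0 negb_or => /andP[].
  have gnz z : `|z| <= 1 -> g.[z] != 0.
    by move=> hz; move: (Qnz z hz); rewrite QE mulf_eq0 negb_or => /andP[].
  split; first split.
  + exact: rat_holo.
  + split; first exact: rat_cont.
    apply: sup_bound => z hz.
    have hz' : `|z| <= 1 by rewrite hz.
    have := hlt z hz'; rewrite PE QE !normrM ltr_pM2r //.
    by rewrite normr_gt0 gnz.
  + move=> _ z _ hQ; rewrite real_ltNge ?normr_real ?real1 //; apply/negP => hz.
    by move: (Qnz z hz); rewrite -rootE hQ.
- move=> [[hol [hcont [r hr1 hsup]]] hII].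
  have q0 : q != 0 by apply: contra_neq Q0 => e; rewrite Qg e mul0r.
  have qnz z : `|z| <= 1 -> q.[z] != 0.
    move=> hz; case: (eqVneq q.[z] 0) => // rq0.
    have rq : root q z by rewrite rootE rq0.
    have cqp : coprimep q p by rewrite coprimep_sym.
    have p0 : p.[z] != 0 by apply: (coprimep_root cqp).
    by exfalso; exact: (@pole_discont _ p q z q0 hz rq p0 hcont).
  have hcirc z : `|z| = 1 -> `|p.[z]| <= r * `|q.[z]|.
    move=> hz; have := hsup z hz; rewrite normrM normfV ler_pdivrMr //.
    by rewrite normr_gt0 qnz // hz.
  have [rsq hrsq] := closed_field_poly_normal q.
  have lq0 : lead_coef q != 0 by rewrite lead_coef_eq0.
  have hout a : a \in rsq -> 1 < `|a|.
    move=> ha; rewrite real_ltNge ?normr_real ?real1 //; apply/negP => hz.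
    have : root q a by rewrite hrsq rootZ // root_prod_XsubC.
    by rewrite rootE (negbTE (qnz a hz)).
  have hpq z : `|z| <= 1 -> `|p.[z]| < `|q.[z]|.
    move=> hz; have hq : 0 < `|q.[z]| by rewrite normr_gt0 qnz.
    apply: le_lt_trans (_ : _ <= r * `|q.[z]|) _; last by rewrite gtr_pMl.
    move: hz; rewrite le_eqVlt => /orP[/eqP hz | hz]; first exact: hcirc.
    rewrite hrsq; apply: max_principle => //.
    by move=> w hw; rewrite -hrsq; apply: hcirc.
  have gnz z : `|z| <= 1 -> g.[z] != 0.
    move=> hz; case: (eqVneq g.[z] 0) => // rg0.
    have rg : root g z by rewrite rootE rg0.
    have hR : Rn x y = 0.
      by apply/eqP; rewrite /Rn resultant_eq0 -/P -/Q -/g (root_size_gt1 g0 rg).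
    have rP : root P z by rewrite rootE PE (eqP rg) mulr0.
    have rQ : root Q z by rewrite rootE QE (eqP rg) mulr0.
    by have := hII hR z rP rQ; rewrite real_ltNge ?normr_real ?real1 // hz.
  move=> z w hz hw; apply/negP => /eqP e.
  have hlt : `|P.[z]| < `|Q.[z]|.
    by rewrite PE QE !normrM ltr_pM2r ?normr_gt0 ?gnz // hpq.
  move/eqP: e; rewrite subr_eq0 => /eqP e.
  have : `|Q.[z]| <= `|P.[z]| by rewrite e normrM; apply: ler_piMl.
  by move/(lt_le_trans hlt); rewrite ltxx.
Qed.
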